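(* Let $\mathcal{W}$ be a finite set and $(X_t)_{t\ge1}$ a time-homogeneous first-order Markov chain on $\mathcal{W}$ with initial distribution $p_{x_1}$ and transition probabilities $q_x(x_{t+1}\mid x_t)$. For any history-dependent release policy $\boldsymbol q\in\mathcal{Q}_H$ and any $n\ge1$, $$I^{\boldsymbol q}(X^n;Y^n)\ \ge\ \sum_{t=1}^n I^{\boldsymbol q}(X_t,X_{t-1};Y_t\mid Y^{t-1}),$$ with equality if and only if $\boldsymbol q\in\mathcal{Q}_S$.
   Context: Notation: $X^t=(X_1,\dots,X_t)$, $Y^{t-1}=(Y_1,\dots,Y_{t-1})$, $Y^0$ empty; at $t=1$ terms involving $X_0$ are absent. A history-dependent release policy is a sequence $\boldsymbol q=\{q_t(y_t\mid x^t,y^{t-1})\}_{t\ge1}$ of conditional probability distributions on $\mathcal{W}$; $\mathcal{Q}_H$ is the set of all such policies. The released locations $Y_t\in\mathcal W$ and true locations have joint law $$P^{\boldsymbol q}(X^n=x^n,Y^n=y^n)=p_{x_1}(x_1)q_1(y_1\mid x_1)\prod_{t=2}^n q_x(x_t\mid x_{t-1})\,q_t(y_t\mid x^t,y^{t-1}),$$ and $I^{\boldsymbol q}$ denotes mutual information under this law. $\mathcal{Q}_S\subseteq\mathcal{Q}_H$ is the set of policies of the form $q_t(y_t\mid x_t,x_{t-1},y^{t-1})$, depending on the true trajectory only through $(x_t,x_{t-1})$. *)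

(* Defs.v *)
From HB Require Import structures.
From mathcomp Require Import all_boot all_order all_algebra.
From mathcomp Require Import reals exp.
Set Implicit Arguments. Unset Strict Implicit. Unset Printing Implicit Defensive.
Import Order.TTheory GRing.Theory Num.Theory.
Local Open Scope ring_scope.

Section InfoDefs.
Variable R : realType.

Definition prob (Om : finType) (P : Om -> R) (E : pred Om) : R :=
  \sum_(w | E w) P w.

(* Conditional mutual information I(A;B|C) (natural log) of random variables
   A, B, C defined on the finite space (Om, P):
   I(A;B|C) = sum_w P(w) log [ P(A,B,C) P(C) / (P(A,C) P(B,C)) ]
   where each probability is that of the event "same value as at w".
   (This equals sum_{a,b,c} p(a,b,c) log (p(a,b,c)p(c)/(p(a,c)p(b,c))).) *)
Definition cmi (Om : finType) (P : Om -> R)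
    (TA TB TC : eqType) (A : Om -> TA) (B : Om -> TB) (C : Om -> TC) : R :=
  \sum_(w : Om) P w *
    ln (prob P [pred v | [&& A v == A w, B v == B w & C v == C w]]
        * prob P [pred v | C v == C w]
        / (prob P [pred v | (A v == A w) && (C v == C w)]
           * prob P [pred v | (B v == B w) && (C v == C w)])).

Definition mi (Om : finType) (P : Om -> R) (TA TB : eqType)
    (A : Om -> TA) (B : Om -> TB) : R :=
  cmi P A B (fun _ => tt).

(* Time is 0-based below: index t (t = 0,...,n-1) stands for the paper's t+1.
   A release policy: q t xs ys y = q_{t+1}(y | x^{t+1} = xs, y^{t} = ys),
   meaningful for size xs = t.+1, size ys = t. *)
Definition policy (W : finType) := nat -> seq W -> seq W -> W -> R.

Definition is_policyH (W : finType) (q : policy W) : Prop :=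
  forall t (xs ys : seq W), size xs = t.+1 -> size ys = t ->
    (forall y, 0 <= q t xs ys y) /\ \sum_(y : W) q t xs ys y = 1.

(* q is in Q_S: a policy in Q_H whose kernel depends on the true trajectory
   only through the last two locations (x_t, x_{t-1}) (only x_t at time 1).
   [drop t.-1 xs] is the list of these last (at most two) locations. *)
Definition is_policyS (W : finType) (q : policy W) : Prop :=
  is_policyH q /\
  forall t (xs xs' ys : seq W), size xs = t.+1 -> size xs' = t.+1 ->
    drop t.-1 xs = drop t.-1 xs' -> q t xs ys =1 q t xs' ys.

Definition outcome (W : finType) (n : nat) := (n.-tuple W * n.-tuple W)%type.

(* Joint law P^q(X^n = xs, Y^n = ys) for a Markov chain with initial law p1
   and transition kernel K (K x x' = q_x(x' | x)). *)
Definition joint (W : finType) (n : nat) (p1 : W -> R) (K : W -> W -> R)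
    (q : policy W) (w : outcome W n) : R :=
  let xs := w.1 in let ys := w.2 in
  \prod_(t < n)
    ((if t == 0 :> nat then p1 (tnth xs t)
      else K (nth (tnth xs t) xs t.-1) (tnth xs t))
     * q t (take t.+1 xs) (take t ys) (tnth ys t)).

(* X_t together with X_{t-1} (None at the first time step, where X_0 is absent). *)
Definition Xpair (W : finType) (n : nat) (t : 'I_n) (w : outcome W n)
  : (W * option W)%type :=
  (tnth w.1 t, if t == 0 :> nat then None else Some (nth (tnth w.1 t) w.1 t.-1)).

Definition Ycur (W : finType) (n : nat) (t : 'I_n) (w : outcome W n) : W :=
  tnth w.2 t.
Definition Ypast (W : finType) (n : nat) (t : 'I_n) (w : outcome W n) : seq W :=
  take t w.2.

End InfoDefs.

(* Main.v *)
Require Import Defs.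
From HB Require Import structures.
From mathcomp Require Import all_boot all_order all_algebra.
From mathcomp Require Import reals exp.
From mathcomp.algebra_tactics Require Import ring lra.
Set Implicit Arguments. Unset Strict Implicit. Unset Printing Implicit Defensive.
Import Order.TTheory GRing.Theory Num.Theory.
Local Open Scope ring_scope.

Section Gen.
Variable R : realType.
Variable T : finType.

Definition sprod n (f : nat -> seq T -> T -> R) (z : n.-tuple T) : R :=
  \prod_(i < n) f i (take i z) (tnth z i).

Definition rowsum1 (f : nat -> seq T -> T -> R) :=
  forall i s, size s = i -> \sum_a f i s a = 1.

Lemma sum_tupleS n (G : n.+1.-tuple T -> R) :
  \sum_(z : n.+1.-tuple T) G z = \sum_(a : T) \sum_(z : n.-tuple T) G [tuple of a :: z].
Proof.
rewrite pair_big /=.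
rewrite (reindex (fun p : T * n.-tuple T => [tuple of p.1 :: p.2])) //=.
exists (fun z : n.+1.-tuple T => (thead z, behead_tuple z)) => [[a z] _|z _] /=.
  by congr pair; apply: val_inj.
by rewrite [RHS]tuple_eta.
Qed.

Lemma sprod_cons n f a (z : n.-tuple T) :
  sprod f [tuple of a :: z] = f 0%N [::] a * sprod (fun i s b => f i.+1 (a :: s) b) z.
Proof.
rewrite /sprod big_ord_recl tnth0 /=; congr (_ * _).
by apply: eq_bigr => i _; rewrite tnthS.
Qed.

Lemma sum_tuple0 (G : 0.-tuple T -> R) : \sum_(z : 0.-tuple T) G z = G [tuple].
Proof.
by rewrite (big_pred1 [tuple]) // => z; apply/esym/eqP; rewrite [z]tuple0.
Qed.

Lemma Gsum n f : rowsum1 f -> \sum_(z : n.-tuple T) sprod f z = 1.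
Proof.
elim: n f => [|n IH] f Hf.
  by rewrite sum_tuple0 /sprod big_ord0.
rewrite sum_tupleS -(Hf 0%N [::]) //; apply: eq_bigr => a _.
under eq_bigr do rewrite sprod_cons.
rewrite -big_distrr /= IH ?mulr1 // => i s Hs.
by apply: Hf; rewrite /= Hs.
Qed.

Lemma master n (f g : nat -> seq T -> T -> R) k (h : seq T -> T -> R) a0 :
  rowsum1 f -> rowsum1 g -> (k < n)%N ->
  (forall i s a, (i < k)%N -> f i s a = g i s a) ->
  (forall s, size s = k -> \sum_a f k s a * h s a = \sum_a g k s a * h s a) ->
  \sum_(z : n.-tuple T) sprod f z * h (take k z) (nth a0 z k)
  = \sum_(z : n.-tuple T) sprod g z * h (take k z) (nth a0 z k).
Proof.
elim: n f g k h => [|n IH] f g k h Hf Hg // Hk Hfg Hh.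
rewrite !sum_tupleS.
under eq_bigr do under eq_bigr do rewrite sprod_cons.
under [RHS]eq_bigr do under eq_bigr do rewrite sprod_cons.
case: k Hk Hfg Hh => [|k] Hk Hfg Hh /=.
  transitivity (\sum_a f 0%N [::] a * h [::] a).
    apply: eq_bigr => a _; under eq_bigr do rewrite mulrAC.
    rewrite -big_distrr /= Gsum ?mulr1 // => i s Hs.
    by apply: Hf; rewrite /= Hs.
  rewrite Hh //; symmetry.
  apply: eq_bigr => a _; under eq_bigr do rewrite mulrAC.
  rewrite -big_distrr /= Gsum ?mulr1 // => i s Hs.
  by apply: Hg; rewrite /= Hs.
apply: eq_bigr => a _.
under eq_bigr do rewrite -mulrA.
under [RHS]eq_bigr do rewrite -mulrA.
rewrite -!big_distrr /= Hfg //; congr (_ * _).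
apply: (IH _ _ k (fun s b => h (a :: s) b)) => //.
- by move=> i s Hs; apply: Hf; rewrite /= Hs.
- by move=> i s Hs; apply: Hg; rewrite /= Hs.
- by move=> i s b Hi; apply: Hfg.
- by move=> s Hs; apply: Hh; rewrite /= Hs.
Qed.

Lemma sum_delta (c : T) : \sum_(a : T) ((a == c)%:R : R) = 1.
Proof. by rewrite (bigD1 c) //= eqxx big1 ?addr0 // => a /negPf ->. Qed.

Lemma exists_nz (I : finType) (F : I -> R) : \sum_i F i != 0 -> exists i, F i != 0.
Proof.
move=> H; case: (pickP (fun i => F i != 0)) => [i Hi|H0]; first by exists i.
by move: H; rewrite big1 ?eqxx // => i _; move: (H0 i) => /negbFE/eqP.
Qed.

Lemma ext n (f : nat -> seq T -> T -> R) (z0 : n.-tuple T) (t : 'I_n) a1 :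
  rowsum1 f ->
  (forall i : 'I_n, (i < t)%N -> f i (take i z0) (tnth z0 i) != 0) ->
  f t (take t z0) a1 != 0 ->
  exists z : n.-tuple T, [/\ take t z = take t z0, tnth z t = a1 & sprod f z != 0].
Proof.
move=> Hf Hpre Ht.
pose g i s a : R := if (i < t)%N then (a == nth a1 z0 i)%:R
                    else if i == t :> nat then (a == a1)%:R else f i s a.
have Hg : rowsum1 g.
  move=> i s Hs; rewrite /g; case: (i < t)%N; first exact: sum_delta.
  by case: (i == t :> nat); [exact: sum_delta | exact: Hf].
have := Gsum n Hg; move=> /(congr1 (fun x => x != 0)); rewrite oner_neq0.
move=> /exists_nz [z]; rewrite /sprod => /prodf_neq0 Hz.
have Hz' : forall i : 'I_n, g i (take i z) (tnth z i) != 0.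
  by move=> i; apply: Hz.
have Htk : take t z = take t z0.
  apply: (@eq_from_nth _ a1); first by rewrite !size_take !size_tuple.
  move=> j; rewrite size_take size_tuple ltn_ord => Hj.
  rewrite !nth_take //.
  have Hjn : (j < n)%N by apply: ltn_trans Hj (ltn_ord t).
  move: (Hz' (Ordinal Hjn)); rewrite /g /= Hj (tnth_nth a1) /=.
  by move=> H; apply/eqP; apply: contraNT H => /negPf ->; rewrite /= eqxx.
have Htt : tnth z t = a1.
  move: (Hz' t); rewrite /g ltnn eqxx.
  by move=> H; apply/eqP; apply: contraNT H => /negPf ->; rewrite /= eqxx.
exists z; split => //.
rewrite /sprod; apply/prodf_neq0 => i _.
case: (ltngtP i t) => Hit.
- have -> : take i z = take i z0.
    by rewrite -(take_takel _ (ltnW Hit)) Htk take_takel // ltnW.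
  have -> : tnth z i = tnth z0 i.
    move: (Hz' i); rewrite /g Hit (tnth_nth a1) (tnth_nth a1 z0 i).
    by move=> H; apply/eqP; apply: contraNT H => /negPf ->; rewrite /= eqxx.
  exact: Hpre.
- move: (Hz' i); rewrite /g ltnNge (ltnW Hit) /=.
  by rewrite gtn_eqF.
- have -> : i = t by apply: val_inj.
  by rewrite Htk Htt.
Qed.

End Gen.

Section Spec.
Variable R : realType.
Variable W : finType.
Variables (p1 : W -> R) (K : W -> W -> R) (n : nat).

Definition unz (z : n.-tuple (W * W)) : outcome W n :=
  (map_tuple fst z, map_tuple snd z).
Definition zipT (w : outcome W n) : n.-tuple (W * W) := zip_tuple w.1 w.2.

Lemma unzK : cancel zipT unz.
Proof.
case=> xs ys; rewrite /unz /zipT /=; congr pair; apply: val_inj => /=.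
  by rewrite -/(unzip1 _) unzip1_zip // !size_tuple.
by rewrite -/(unzip2 _) unzip2_zip // !size_tuple.
Qed.

Lemma zipTK : cancel unz zipT.
Proof. by move=> z; apply: val_inj; rewrite /= zip_unzip. Qed.

Lemma sum_out (G : outcome W n -> R) :
  \sum_(w : outcome W n) G w = \sum_(z : n.-tuple (W * W)) G (unz z).
Proof.
by rewrite (reindex unz) //; exists zipT => z _; [exact: zipTK | exact: unzK].
Qed.

Definition mterm (xs : n.-tuple W) (i : 'I_n) : R :=
  if i == 0 :> nat then p1 (tnth xs i) else K (nth (tnth xs i) xs i.-1) (tnth xs i).
Definition qterm (q : policy R W) (w : outcome W n) (i : 'I_n) : R :=
  q i (take i.+1 w.1) (take i w.2) (tnth w.2 i).

Lemma jointE q w : joint p1 K q w = \prod_(i < n) (mterm w.1 i * qterm q w i).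
Proof. by []. Qed.

Definition mpart (i : nat) (s : seq (W * W)) (a : W * W) : R :=
  if i == 0 then p1 a.1 else K (last a.1 (unzip1 s)) a.1.
Definition qpart (q : policy R W) (i : nat) (s : seq (W * W)) (a : W * W) : R :=
  q i (rcons (unzip1 s) a.1) (unzip2 s) a.2.
Definition mk q i s a := mpart i s a * qpart q i s a.

Lemma take_tnth T (m : nat) (xs : m.-tuple T) (i : 'I_m) :
  take i.+1 xs = rcons (take i xs) (tnth xs i).
Proof. by rewrite (tnth_nth (tnth xs i)) -take_nth // size_tuple. Qed.

Lemma mterm_unz z (i : 'I_n) : mterm (unz z).1 i = mpart i (take i z) (tnth z i).
Proof.
rewrite /mterm /mpart /= tnth_map; case: eqP => // Hi.
congr K; rewrite -nth_last /unzip1 map_take size_take size_map size_tuple ltn_ord.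
by rewrite nth_take //; case: (nat_of_ord i) Hi.
Qed.

Lemma qterm_unz q z (i : 'I_n) : qterm q (unz z) i = qpart q i (take i z) (tnth z i).
Proof.
rewrite /qterm /qpart /= take_tnth !tnth_map; congr q.
- by rewrite /unzip1 map_take.
- by rewrite /unzip2 map_take.
Qed.

Lemma joint_unz q z : joint p1 K q (unz z) = sprod (mk q) z.
Proof.
by rewrite jointE /sprod; apply: eq_bigr => i _; rewrite mterm_unz qterm_unz.
Qed.

Hypothesis Hp1 : \sum_x p1 x = 1.
Hypothesis HK : forall x, \sum_x' K x x' = 1.

Lemma rowsum_mk q : is_policyH q -> rowsum1 (mk q).
Proof.
move=> Hq i s Hs; rewrite -(pair_big xpredT xpredT (fun x y => mk q i s (x, y))) /=.
transitivity (\sum_x mpart i s (x, x)).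
  apply: eq_bigr => x _; rewrite /mk /mpart /= -big_distrr /=.
  have Hs1 : size (rcons (unzip1 s) x) = i.+1 by rewrite size_rcons size_map Hs.
  have Hs2 : size (unzip2 s) = i by rewrite size_map Hs.
  by have [_ ->] := Hq i _ _ Hs1 Hs2; rewrite mulr1.
rewrite /mpart; case: eqP => Hi; first exact: Hp1.
case: s Hs => [|a s] Hs; first by rewrite -Hs in Hi.
exact: HK.
Qed.

Local Notation J q := (@joint R W n p1 K q).

Hypothesis Hp1n : forall x, 0 <= p1 x.
Hypothesis HKn : forall x x', 0 <= K x x'.

Lemma total q : is_policyH q -> \sum_w J q w = 1.
Proof.
move=> Hq; rewrite sum_out; under eq_bigr do rewrite joint_unz.
by apply: Gsum; apply: rowsum_mk.
Qed.

Lemma size_take_ord T (xs : n.-tuple T) (i : 'I_n) : size (take i xs) = i.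
Proof. by rewrite size_takel // size_tuple ltnW. Qed.

Lemma size_take_ordS T (xs : n.-tuple T) (i : 'I_n) : size (take i.+1 xs) = i.+1.
Proof. by rewrite size_takel // size_tuple. Qed.

Lemma mterm_ge0 xs i : 0 <= mterm xs i.
Proof. by rewrite /mterm; case: eqP. Qed.

Lemma qterm_ge0 q w i : is_policyH q -> 0 <= qterm q w i.
Proof.
move=> Hq; rewrite /qterm.
by have [-> _] := Hq i _ _ (size_take_ordS w.1 i) (size_take_ord w.2 i).
Qed.

Lemma joint_ge0 q w : is_policyH q -> 0 <= J q w.
Proof.
move=> Hq; rewrite jointE; apply: prodr_ge0 => i _.
by rewrite mulr_ge0 ?mterm_ge0 ?qterm_ge0.
Qed.

Lemma xmarg q xs : is_policyH q ->
  prob (J q) [pred v | v.1 == xs] = \prod_i mterm xs i.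
Proof.
move=> Hq; rewrite /prob big_mkcond sum_out /=.
pose g i s (a : W * W) : R :=
  (if (i < n)%N then (a.1 == nth a.1 xs i)%:R else mpart i s a) * qpart q i s a.
have Hg : rowsum1 g.
  move=> i s Hs; rewrite -(pair_big xpredT xpredT (fun x y => g i s (x, y))) /=.
  transitivity (\sum_x (if (i < n)%N then (x == nth x xs i)%:R else mpart i s (x, x))).
    apply: eq_bigr => x _; rewrite /g /mpart /= -big_distrr /=.
    have Hs1 : size (rcons (unzip1 s) x) = i.+1 by rewrite size_rcons size_map Hs.
    have Hs2 : size (unzip2 s) = i by rewrite size_map Hs.
    by have [_ ->] := Hq i _ _ Hs1 Hs2; rewrite mulr1.
  case: (ltnP i n) => Hin.
    transitivity (\sum_x ((x == nth (tnth xs (Ordinal Hin)) xs i)%:R : R)); last exact: sum_delta.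
    by apply: eq_bigr => x _; rewrite (set_nth_default (tnth xs (Ordinal Hin)) x) ?size_tuple.
  rewrite /mpart; case: eqP => Hi; first exact: Hp1.
  case: s Hs => [|a s] Hs; first by rewrite -Hs in Hi.
  exact: HK.
transitivity ((\prod_i mterm xs i) * \sum_(z : n.-tuple (W * W)) sprod g z); last by rewrite (Gsum n Hg) mulr1.
rewrite big_distrr /=; apply: eq_bigr => z _.
case: eqP => Hx.
  rewrite jointE big_split /=; congr (_ * _); first by rewrite Hx.
  rewrite /sprod; apply: eq_bigr => i _.
  rewrite /g /=; have -> : (i < n)%N = true by apply: ltn_ord.
  by rewrite qterm_unz -tnth_nth -Hx tnth_map eqxx mul1r.
have [i Hi] : exists i, (tnth z i).1 != tnth xs i.
  apply/existsP; apply: contraT; rewrite negb_exists => /forallP H.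
  by case: Hx; apply: eq_from_tnth => i; rewrite tnth_map; move: (H i) => /negPn/eqP.
rewrite /sprod [X in _ * X](bigD1 i) //= /g /=.
have -> : (i < n)%N = true by apply: ltn_ord.
by rewrite -tnth_nth (negPf Hi) mul0r mul0r mulr0.
Qed.

Definition keyof (t : nat) (xs : seq W) : option (W * option W) :=
  match drop t.-1 xs with
  | [:: a] => Some (a, None)
  | [:: a; b] => Some (b, Some a)
  | _ => None
  end.

Lemma drop_take2 (x0 : W) (s : seq W) i : (i.+1 < size s)%N ->
  drop i (take i.+2 s) = [:: nth x0 s i; nth x0 s i.+1].
Proof.
move=> Hi; rewrite -[i.+2]/(2 + i)%N -take_drop (drop_nth x0) ?(ltnW Hi) //.
by rewrite (drop_nth x0 Hi) /= take0.
Qed.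

Lemma keyof_pre (w : outcome W n) (t : 'I_n) : keyof t (take t.+1 w.1) = Some (Xpair t w).
Proof.
rewrite /Xpair; case: t => [[|t] Ht] /=.
  by rewrite /keyof /= drop0 (take_tnth w.1 (Ordinal Ht)) take0.
rewrite /keyof /= (drop_take2 (tnth w.1 (Ordinal Ht))) ?size_tuple //.
by congr (Some (_, _)); symmetry; apply: tnth_nth.
Qed.

Lemma cardW : (0 < #|W|)%N.
Proof.
have : \sum_(x : W) p1 x != 0 by rewrite Hp1 oner_neq0.
by move=> /exists_nz [x _]; apply/card_gt0P; exists x.
Qed.

Definition unifW : R := #|W|%:R^-1.

Lemma unifW_ge0 : 0 <= unifW.
Proof. by rewrite /unifW invr_ge0 ler0n. Qed.

Lemma sum_unifW : \sum_(y : W) unifW = 1.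
Proof.
rewrite sumr_const -mulr_natr /unifW mulVf //.
by rewrite pnatr_eq0 -lt0n cardW.
Qed.

Lemma ln_le (z : R) : 0 < z -> ln z <= z - 1.
Proof.
move=> Hz; have := @le_ln1Dx R (z - 1).
have -> : 1 + (z - 1) = z by ring.
by apply; lra.
Qed.

Lemma ln_eq (z : R) : 0 < z -> ln z = z - 1 -> z = 1.
Proof.
move=> Hz Hl; apply/eqP; apply: contraT => Hz1.
have H0 : ln z != 0 by rewrite ln_eq0.
have := expR_gt1Dx H0; rewrite lnK ?posrE // Hl.
lra.
Qed.

Definition hybrid (q r : policy R W) (t0 : nat) : policy R W :=
  fun t xs ys => if t == t0 then r t xs ys else q t xs ys.

Lemma hybrid_policy q r t0 : is_policyH q -> is_policyH r -> is_policyH (hybrid q r t0).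
Proof. by move=> Hq Hr t xs ys H1 H2; rewrite /hybrid; case: eqP => _; [exact: Hr | exact: Hq]. Qed.

Lemma pre_unz (z : n.-tuple (W * W)) (t : 'I_n) :
  [/\ take t.+1 (unz z).1 = rcons (unzip1 (take t z)) (tnth z t).1,
      take t (unz z).2 = unzip2 (take t z) & tnth (unz z).2 t = (tnth z t).2].
Proof.
split.
- by rewrite take_tnth /= tnth_map /unzip1 map_take.
- by rewrite /= /unzip2 map_take.
- by rewrite /= tnth_map.
Qed.

Lemma mk_zipT q (w : outcome W n) (i : 'I_n) :
  mk q i (take i (zipT w)) (tnth (zipT w) i) = mterm w.1 i * qterm q w i.
Proof. by rewrite /mk -mterm_unz -qterm_unz unzK. Qed.

Lemma tnth_zipT (w : outcome W n) (t : 'I_n) : tnth (zipT w) t = (tnth w.1 t, tnth w.2 t).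
Proof.
rewrite (tnth_nth (tnth w.1 t, tnth w.2 t)) /= nth_zip ?size_tuple //.
by rewrite -!tnth_nth.
Qed.

Lemma mk_alt q (w : outcome W n) (t : 'I_n) y :
  mk q t (take t (zipT w)) (tnth w.1 t, y) =
  mterm w.1 t * q t (take t.+1 w.1) (take t w.2) y.
Proof.
have [H1 H2 H3] := pre_unz (zipT w) t; rewrite unzK tnth_zipT /= in H1 H2 H3.
have Hm := mterm_unz (zipT w) t; rewrite unzK tnth_zipT in Hm.
rewrite /mk Hm /mpart /qpart /= H1 H2 //.
Qed.

Lemma Xpair_unz (z : n.-tuple (W * W)) (t : 'I_n) :
  Xpair t (unz z) = ((tnth z t).1,
    if t == 0 :> nat then None else Some (last (tnth z t).1 (unzip1 (take t z)))).
Proof.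
rewrite /Xpair /= tnth_map; case: eqP => // Hi.
congr (_, Some _); rewrite -nth_last /unzip1 map_take size_take size_map size_tuple ltn_ord.
by rewrite nth_take //; case: (nat_of_ord t) Hi.
Qed.

Lemma drop_pre (w : outcome W n) (t : 'I_n) : drop t.-1 (take t.+1 w.1) =
  match Xpair t w with (a, None) => [:: a] | (a, Some b) => [:: b; a] end.
Proof.
rewrite /Xpair; case: t => [[|t] Ht] /=.
  by rewrite drop0 (take_tnth w.1 (Ordinal Ht)) take0.
rewrite (drop_take2 (tnth w.1 (Ordinal Ht))) ?size_tuple //.
by congr [:: _; _]; symmetry; apply: tnth_nth.
Qed.

Definition deltapol (y0 : W) : policy R W := fun _ _ _ y => (y == y0)%:R.

Lemma deltapol_policy y0 : is_policyH (deltapol y0).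
Proof. by move=> t xs ys _ _; split; [move=> y; exact: ler0n | exact: sum_delta]. Qed.

Lemma mk_sum_h r (t : nat) (s : seq (W * W)) (h : seq (W * W) -> W -> R) :
  is_policyH r -> size s = t ->
  \sum_a mk r t s a * h s a.1 = \sum_x mpart t s (x, x) * h s x.
Proof.
move=> Hr Hs; rewrite -(pair_big xpredT xpredT (fun x y => mk r t s (x, y) * h s (x, y).1)) /=.
apply: eq_bigr => x _; rewrite /mk /mpart /=.
under eq_bigr do rewrite mulrAC.
rewrite -big_distrr /=.
have Hs1 : size (rcons (unzip1 s) x) = t.+1 by rewrite size_rcons size_map Hs.
have Hs2 : size (unzip2 s) = t by rewrite size_map Hs.
by rewrite /qpart /=; have [_ ->] := Hr t _ _ Hs1 Hs2; rewrite mulr1.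
Qed.

Section Main.
Variable q : policy R W.
Hypothesis Hq : is_policyH q.
Local Notation P := (J q).

Definition PX (w : outcome W n) := prob P [pred v | v.1 == w.1].
Definition PY (w : outcome W n) := prob P [pred v | v.2 == w.2].
Definition Yp k (w : outcome W n) := prob P [pred v : outcome W n | take k v.2 == take k w.2].
Definition Ak (t : 'I_n) k ys y :=
  prob P [pred v | [&& Xpair t v == k, Ycur t v == y & Ypast t v == ys]].
Definition Ck (t : 'I_n) k ys := prob P [pred v | (Xpair t v == k) && (Ypast t v == ys)].

Lemma P_ge0 w : 0 <= P w. Proof. exact: joint_ge0. Qed.

Lemma prob_ge0 (E : pred (outcome W n)) : 0 <= prob P E.
Proof. by apply: sumr_ge0 => v _; apply: P_ge0. Qed.

Lemma prob_pt (E : pred (outcome W n)) w : E w -> P w <= prob P E.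
Proof.
move=> Ew; rewrite /prob (bigD1 w) //= lerDl.
by apply: sumr_ge0 => v _; apply: P_ge0.
Qed.

Lemma prob_eq (E E' : pred (outcome W n)) : E =1 E' -> prob P E = prob P E'.
Proof. by move=> H; apply: eq_bigl. Qed.

Lemma mi_eq : mi P (fun w : outcome W n => w.1) (fun w => w.2) =
  \sum_w P w * ln (P w * 1 / (PX w * PY w)).
Proof.
rewrite /mi /cmi; apply: eq_bigr => w _; congr (_ * ln (_ * _ / (_ * _))).
- rewrite (@prob_eq _ (pred1 w)); first by rewrite /prob big_pred1_eq.
  by case=> a b; case: w => c d /=; rewrite andbT xpair_eqE.
- rewrite (@prob_eq _ predT) => [|v /=]; last by rewrite eqxx.
  exact: total.
- by apply: prob_eq => v /=; rewrite andbT.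
- by apply: prob_eq => v /=; rewrite andbT.
Qed.

Lemma cmi_eq (t : 'I_n) : cmi P (Xpair t) (Ycur t) (Ypast t) =
  \sum_w P w * ln (Ak t (Xpair t w) (Ypast t w) (Ycur t w) * Yp t w /
                   (Ck t (Xpair t w) (Ypast t w) * Yp t.+1 w)).
Proof.
rewrite /cmi; apply: eq_bigr => w _; congr (_ * ln (_ * _ / (_ * _))).
apply: prob_eq => v /=; rewrite /Ycur /Ypast !take_tnth eqseq_rcons andbC //.
Qed.

Lemma ln_prod (I : finType) (F : I -> R) :
  (forall i, 0 < F i) -> ln (\prod_i F i) = \sum_i ln (F i).
Proof.
move=> HF.
suff [] : 0 < \prod_i F i /\ ln (\prod_i F i) = \sum_i ln (F i) by [].
apply: (big_ind2 (fun x y => 0 < x /\ ln x = y)).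
- by rewrite ln1.
- move=> a1 a2 b1 b2 [Ha <-] [Hb <-]; split; first exact: mulr_gt0.
  by rewrite lnM ?posrE.
- by move=> i _; split.
Qed.

Lemma P_factors w : 0 < P w -> forall i, 0 < mterm w.1 i /\ 0 < qterm q w i.
Proof.
move=> Hw i; have : P w != 0 by rewrite gt_eqF.
rewrite jointE => /prodf_neq0 /(_ i isT); rewrite mulf_eq0 negb_or => /andP[H1 H2].
by rewrite !lt_def H1 H2 mterm_ge0 qterm_ge0.
Qed.

Lemma lnP_PX w : 0 < P w -> ln (P w) = ln (PX w) + \sum_t ln (qterm q w t).
Proof.
move=> Hw; have HF := P_factors Hw.
rewrite /PX xmarg // -ln_prod; last by move=> i; case: (HF i).
rewrite -lnM ?posrE; last by apply: prodr_gt0 => i _; case: (HF i).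
  by rewrite jointE big_split.
by apply: prodr_gt0 => i _; case: (HF i).
Qed.

Lemma Yp0 w : Yp 0 w = 1.
Proof.
rewrite /Yp (@prob_eq _ predT) => [|v]; last by rewrite /= !take0.
exact: total.
Qed.

Lemma YpN w : Yp n w = PY w.
Proof.
apply: prob_eq => v /=.
by rewrite !take_oversize ?size_tuple.
Qed.

Lemma lnABCD (a b c d : R) : 0 < a -> 0 < b -> 0 < c -> 0 < d ->
  ln (a * b / (c * d)) = ln a + ln b - (ln c + ln d).
Proof.
move=> Ha Hb Hc Hd.
rewrite ln_div ?posrE ?mulr_gt0 // !lnM ?posrE //.
Qed.

Definition Dt (t : 'I_n) w := ln (qterm q w t) - ln (Ak t (Xpair t w) (Ypast t w) (Ycur t w))
  + ln (Ck t (Xpair t w) (Ypast t w)).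

Lemma pt_decomp w : 0 < P w ->
  ln (P w * 1 / (PX w * PY w)) -
  \sum_(t < n) ln (Ak t (Xpair t w) (Ypast t w) (Ycur t w) * Yp t w /
                   (Ck t (Xpair t w) (Ypast t w) * Yp t.+1 w))
  = \sum_t Dt t w.
Proof.
move=> Hw.
have HX : 0 < PX w by apply: lt_le_trans Hw (prob_pt _); rewrite /= eqxx.
have HY : 0 < PY w by apply: lt_le_trans Hw (prob_pt _); rewrite /= eqxx.
have HYp k : 0 < Yp k w by apply: lt_le_trans Hw (prob_pt _); rewrite /= eqxx.
have HA t : 0 < Ak t (Xpair t w) (Ypast t w) (Ycur t w).
  by apply: lt_le_trans Hw (prob_pt _); rewrite /= !eqxx.
have HC t : 0 < Ck t (Xpair t w) (Ypast t w).
  by apply: lt_le_trans Hw (prob_pt _); rewrite /= !eqxx.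
rewrite mulr1 ln_div ?posrE ?mulr_gt0 // lnM ?posrE // lnP_PX //.
have -> : \sum_(t < n) ln (Ak t (Xpair t w) (Ypast t w) (Ycur t w) * Yp t w /
        (Ck t (Xpair t w) (Ypast t w) * Yp t.+1 w))
  = \sum_(t < n) (ln (Ak t (Xpair t w) (Ypast t w) (Ycur t w)) - ln (Ck t (Xpair t w) (Ypast t w)))
    - \sum_(t < n) (ln (Yp t.+1 w) - ln (Yp t w)).
  rewrite -sumrB; apply: eq_bigr => t _.
  rewrite lnABCD ?HA ?HC ?HYp //; ring.
rewrite -(big_mkord xpredT (fun t => ln (Yp t.+1 w) - ln (Yp t w))).
rewrite telescope_sumr // Yp0 YpN ln1.
have -> : \sum_t Dt t w = \sum_t ln (qterm q w t) -
   \sum_(t < n) (ln (Ak t (Xpair t w) (Ypast t w) (Ycur t w)) - ln (Ck t (Xpair t w) (Ypast t w))).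
  by rewrite -sumrB; apply: eq_bigr => t _; rewrite /Dt; ring.
ring.
Qed.

Lemma decomp : mi P (fun w : outcome W n => w.1) (fun w => w.2)
  - \sum_(t < n) cmi P (Xpair t) (Ycur t) (Ypast t) = \sum_(t < n) \sum_w P w * Dt t w.
Proof.
rewrite mi_eq; under [X in _ - X]eq_bigr => t _ do rewrite cmi_eq.
rewrite exchange_big [RHS]exchange_big /= -sumrB; apply: eq_bigr => w _.
rewrite -!big_distrr -mulrBr /=.
have [Hw|Hw] := ltP 0 (P w); first by rewrite pt_decomp.
have -> : P w = 0 by apply/eqP; rewrite eq_le Hw P_ge0.
by rewrite !mul0r.
Qed.

Lemma sumAk t k ys : \sum_y Ak t k ys y = Ck t k ys.
Proof.
rewrite /Ak /Ck /prob; under eq_bigr do rewrite big_mkcond.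
rewrite [RHS]big_mkcond exchange_big /=; apply: eq_bigr => v _.
rewrite (bigD1 (Ycur t v)) //= eqxx big1 ?addr0; first by case: (_ && _).
by move=> y; rewrite eq_sym => /negPf ->; rewrite andbF.
Qed.

Lemma Ak_ge0 t k ys y : 0 <= Ak t k ys y. Proof. exact: prob_ge0. Qed.

Definition rk (t : 'I_n) k ys y :=
  if 0 < Ck t k ys then Ak t k ys y / Ck t k ys else unifW.

Definition rpol : policy R W := fun t xs ys y =>
  match (insub t : option 'I_n) with
  | Some t' => match keyof t xs with Some k => rk t' k ys y | None => unifW end
  | None => unifW
  end.

Lemma rpol_pre (w : outcome W n) (t : 'I_n) : rpol t (take t.+1 w.1) (take t w.2) =1 rk t (Xpair t w) (Ypast t w).
Proof. by move=> y; rewrite /rpol valK keyof_pre. Qed.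

Lemma rk_policy t k ys : (forall y, 0 <= rk t k ys y) /\ \sum_y rk t k ys y = 1.
Proof.
rewrite /rk; case: (boolP (0 < Ck t k ys)) => HC.
  split; first by move=> y; rewrite divr_ge0 ?Ak_ge0 ?ltW.
  by rewrite -big_distrl /= sumAk mulfV // gt_eqF.
by split; [move=> y; exact: unifW_ge0 | exact: sum_unifW].
Qed.

Lemma rpolS : is_policyS rpol.
Proof.
split.
  move=> t xs ys _ _; rewrite /rpol; case: (insub t) => [t'|]; last first.
    by split; [move=> y; exact: unifW_ge0 | exact: sum_unifW].
  case: (keyof t xs) => [k|]; first exact: rk_policy.
  by split; [move=> y; exact: unifW_ge0 | exact: sum_unifW].
by move=> t xs xs' ys _ _ H y; rewrite /rpol /keyof H.
Qed.

Definition rterm (w : outcome W n) (t : 'I_n) := rpol t (take t.+1 w.1) (take t w.2) (tnth w.2 t).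

Lemma rterm_eq (w : outcome W n) (t : 'I_n) : 0 < P w ->
  rterm w t = Ak t (Xpair t w) (Ypast t w) (Ycur t w) / Ck t (Xpair t w) (Ypast t w).
Proof.
move=> Hw; rewrite /rterm rpol_pre /rk ifT //.
by apply: lt_le_trans Hw (prob_pt _); rewrite /= !eqxx.
Qed.

Lemma hyb_rel (w : outcome W n) (t : 'I_n) : 0 < P w ->
  P w * rterm w t / qterm q w t = J (hybrid q rpol t) w.
Proof.
move=> Hw; have [_ Hqt] := P_factors Hw t.
rewrite !jointE (bigD1 t) //= [RHS](bigD1 t) //=.
have -> : \prod_(i < n | i != t) (mterm w.1 i * qterm (hybrid q rpol t) w i)
        = \prod_(i < n | i != t) (mterm w.1 i * qterm q w i).
  apply: eq_bigr => i Hi; rewrite /qterm /hybrid.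
  by have -> : (i == t :> nat) = false by apply/negbTE.
rewrite /qterm /hybrid eqxx -/(rterm w t) -/(qterm q w t).
by field; rewrite gt_eqF.
Qed.

Definition Tt (t : 'I_n) := \sum_w P w * Dt t w.

Lemma Dt_eq (w : outcome W n) (t : 'I_n) : 0 < P w -> Dt t w = - ln (rterm w t / qterm q w t).
Proof.
move=> Hw; have [_ Hqt] := P_factors Hw t.
have HA : 0 < Ak t (Xpair t w) (Ypast t w) (Ycur t w).
  by apply: lt_le_trans Hw (prob_pt _); rewrite /= !eqxx.
have HC : 0 < Ck t (Xpair t w) (Ypast t w).
  by apply: lt_le_trans Hw (prob_pt _); rewrite /= !eqxx.
rewrite rterm_eq // /Dt !ln_div ?posrE ?divr_gt0 //; ring.
Qed.

Lemma Tt_pt (w : outcome W n) (t : 'I_n) : P w - J (hybrid q rpol t) w <= P w * Dt t w.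
Proof.
have [Hw|Hw] := ltP 0 (P w); last first.
  have -> : P w = 0 by apply/eqP; rewrite eq_le Hw P_ge0.
  rewrite mul0r sub0r oppr_le0; apply: joint_ge0; apply: hybrid_policy => //.
  exact: rpolS.1.
have [_ Hqt] := P_factors Hw t.
have Hr : 0 < rterm w t.
  rewrite rterm_eq // divr_gt0 //; apply: lt_le_trans Hw (prob_pt _); by rewrite /= !eqxx.
rewrite Dt_eq // -hyb_rel // -mulrA.
have Hl := ln_le (divr_gt0 Hr Hqt); have HP := P_ge0 w.
set z := rterm w t / qterm q w t in Hl *; set L := ln z in Hl *; nra.
Qed.

Lemma Tt_ge0 t : 0 <= Tt t.
Proof.
have H1 : \sum_w (P w - J (hybrid q rpol t) w) = 0.
  rewrite sumrB total // total ?subrr //; apply: hybrid_policy => //; exact: rpolS.1.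
by rewrite -H1 /Tt; apply: ler_sum => w _; apply: Tt_pt.
Qed.

Lemma Tt_eq0 t : Tt t = 0 -> forall w, 0 < P w -> rterm w t = qterm q w t.
Proof.
move=> H0 w Hw.
have H1 : \sum_w (P w - J (hybrid q rpol t) w) = 0.
  rewrite sumrB total // total ?subrr //; apply: hybrid_policy => //; exact: rpolS.1.
have H2 : \sum_w (P w * Dt t w - (P w - J (hybrid q rpol t) w)) = 0.
  by rewrite sumrB -/(Tt t) H0 H1 subrr.
have Hnn : forall v : outcome W n, true ->
    0 <= P v * Dt t v - (P v - J (hybrid q rpol t) v).
  by move=> v _; rewrite subr_ge0; apply: Tt_pt.
have := psumr_eq0P Hnn H2 (i := w) isT.
have [_ Hqt] := P_factors Hw t.
have Hr : 0 < rterm w t.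
  rewrite rterm_eq // divr_gt0 //; apply: lt_le_trans Hw (prob_pt _); by rewrite /= !eqxx.
rewrite Dt_eq // -hyb_rel // -mulrA => Heq.
have Hz0 := divr_gt0 Hr Hqt.
have Hr' : rterm w t = rterm w t / qterm q w t * qterm q w t by rewrite divfK // gt_eqF.
move: Heq Hz0 Hr'; set z := rterm w t / qterm q w t => Heq Hz0 Hr'.
have Heq' : P w * (ln z - (z - 1)) = - (P w * - ln z - (P w - P w * z)) by ring.
rewrite Heq oppr0 in Heq'.
have Hz : ln z = z - 1.
  apply/eqP; rewrite -subr_eq0; apply/eqP.
  by move/eqP: Heq'; rewrite mulf_eq0 gt_eqF //= => /eqP.
by rewrite Hr' (ln_eq Hz0 Hz) mul1r.
Qed.

Lemma extend (v : outcome W n) (t : 'I_n) y :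
  (forall i : 'I_n, (i < t)%N -> mterm v.1 i * qterm q v i != 0) ->
  mterm v.1 t != 0 -> q t (take t.+1 v.1) (take t v.2) y != 0 ->
  exists w', [/\ 0 < P w', take t.+1 w'.1 = take t.+1 v.1,
                 take t w'.2 = take t v.2 & tnth w'.2 t = y].
Proof.
move=> Hpre Hm Hy.
have [] := @ext _ _ n (mk q) (zipT v) t (tnth v.1 t, y) (rowsum_mk Hq).
- by move=> i Hi; rewrite mk_zipT; apply: Hpre.
- by rewrite mk_alt mulf_neq0.
move=> z [Htk Htt Hnz]; exists (unz z).
have [H1 H2 H3] := pre_unz z t.
have [G1 G2 G3] := pre_unz (zipT v) t; rewrite unzK tnth_zipT /= in G1 G2 G3.
split.
- by rewrite lt_def P_ge0 joint_unz Hnz.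
- by rewrite H1 G1 Htk Htt.
- by rewrite H2 G2 Htk.
- by rewrite H3 Htt.
Qed.

Lemma sum_pol (r : policy R W) (t : 'I_n) (w : outcome W n) : is_policyH r ->
  (forall y, 0 <= r t (take t.+1 w.1) (take t w.2) y) /\
  \sum_y r t (take t.+1 w.1) (take t w.2) y = 1.
Proof. by move=> Hr; apply: Hr; [exact: size_take_ordS | exact: size_take_ord]. Qed.

Lemma agree_all (t : 'I_n) : Tt t = 0 -> forall w, 0 < P w ->
  q t (take t.+1 w.1) (take t w.2) =1 rpol t (take t.+1 w.1) (take t w.2).
Proof.
move=> H0 w Hw.
have HA : forall y, q t (take t.+1 w.1) (take t w.2) y != 0 ->
    q t (take t.+1 w.1) (take t w.2) y = rpol t (take t.+1 w.1) (take t w.2) y.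
  move=> y Hy.
  have HF := P_factors Hw.
  have [] := @extend w t y _ _ Hy.
  - by move=> i _; have [? ?] := HF i; rewrite mulf_neq0 ?gt_eqF.
  - by have [? ?] := HF t; rewrite gt_eqF.
  move=> w' [Hw' E1 E2 E3].
  have := Tt_eq0 H0 Hw'; rewrite /rterm /qterm E1 E2 E3 => ->.
  by [].
have [Hq0 Hq1] := sum_pol t w Hq.
have [Hr0 Hr1] := sum_pol t w rpolS.1.
have Hs : \sum_y (rpol t (take t.+1 w.1) (take t w.2) y - q t (take t.+1 w.1) (take t w.2) y) = 0.
  by rewrite sumrB Hq1 Hr1 subrr.
have Hnn : forall y : W, true -> 0 <= rpol t (take t.+1 w.1) (take t w.2) y - q t (take t.+1 w.1) (take t w.2) y.
  move=> y _; have [Hy|Hy] := eqVneq (q t (take t.+1 w.1) (take t w.2) y) 0.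
    by rewrite Hy subr0.
  by rewrite HA // subrr.
move=> y; have := psumr_eq0P Hnn Hs (i := y) isT.
by move=> /eqP; rewrite subr_eq0 => /eqP.
Qed.

Lemma prob_ind (E : pred (outcome W n)) : prob P E = \sum_v P v * (E v)%:R.
Proof.
rewrite /prob big_mkcond; apply: eq_bigr => v _.
by case: (E v); rewrite ?mulr1 ?mulr0.
Qed.

Lemma joint_delta (t : 'I_n) y0 (v : outcome W n) :
  P v * (Ycur t v == y0)%:R =
  q t (take t.+1 v.1) (take t v.2) y0 * J (hybrid q (deltapol y0) t) v.
Proof.
rewrite !jointE (bigD1 t) //= [X in _ = _ * X](bigD1 t) //=.
have -> : \prod_(i < n | i != t) (mterm v.1 i * qterm (hybrid q (deltapol y0) t) v i)
        = \prod_(i < n | i != t) (mterm v.1 i * qterm q v i).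
  apply: eq_bigr => i Hi; rewrite /qterm /hybrid.
  by have -> : (i == t :> nat) = false by apply/negbTE.
rewrite /qterm /hybrid eqxx /deltapol /Ycur.
by case: (tnth v.2 t =P y0) => [->|_]; rewrite /= ?mulr1 ?mulr0 ?mul0r //; ring.
Qed.

Lemma Csum_eq (t : 'I_n) k ys y0 :
  \sum_v J (hybrid q (deltapol y0) t) v * ((Xpair t v == k) && (Ypast t v == ys))%:R
  = Ck t k ys.
Proof.
rewrite /Ck prob_ind !sum_out.
pose h (s : seq (W * W)) (a : W * W) : R :=
  (((a.1, if t == 0 :> nat then None else Some (last a.1 (unzip1 s))) == k)
    && (unzip2 s == ys))%:R.
have Hh : forall z : n.-tuple (W * W),
    ((Xpair t (unz z) == k) && (Ypast t (unz z) == ys))%:R = h (take t z) (nth (k.1, k.1) z t).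
  move=> z; rewrite Xpair_unz -tnth_nth /h /Ypast.
  by have [_ -> _] := pre_unz z t.
under eq_bigr do rewrite joint_unz Hh.
under [RHS]eq_bigr do rewrite joint_unz Hh.
apply: master => //.
- by apply: rowsum_mk; apply: hybrid_policy => //; exact: deltapol_policy.
- exact: rowsum_mk.
- move=> i s a Hi; rewrite /mk /qpart /hybrid.
  by have -> : (i == t :> nat) = false by rewrite ltn_eqF.
- move=> s Hs.
  have Hqd : is_policyH (hybrid q (deltapol y0) t).
    by apply: hybrid_policy => //; exact: deltapol_policy.
  transitivity (\sum_x mpart t s (x, x) * h s (x, x)).
    exact: (mk_sum_h (fun s x => h s (x, x)) Hqd Hs).
  symmetry; exact: (mk_sum_h (fun s x => h s (x, x)) Hq Hs).
Qed.

Lemma Ak_factor (r' : policy R W) : is_policyS r' ->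
  (forall w : outcome W n, 0 < P w -> forall t : 'I_n,
     q t (take t.+1 w.1) (take t w.2) =1 r' t (take t.+1 w.1) (take t w.2)) ->
  forall (w : outcome W n) (t : 'I_n), 0 < P w ->
  Ak t (Xpair t w) (Ypast t w) (Ycur t w) = qterm q w t * Ck t (Xpair t w) (Ypast t w).
Proof.
move=> [HrH HrS] Hag w t Hw.
set k := Xpair t w; set ys := Ypast t w; set y0 := Ycur t w.
set qd := hybrid q (deltapol y0) t.
have Hqd : is_policyH qd by apply: hybrid_policy => //; exact: deltapol_policy.
rewrite /Ak prob_ind -(Csum_eq t k ys y0) big_distrr /=; apply: eq_bigr => v _.
have -> : P v * ([&& Xpair t v == k, Ycur t v == y0 & Ypast t v == ys])%:R
   = (P v * (Ycur t v == y0)%:R) * ((Xpair t v == k) && (Ypast t v == ys))%:R.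
  by case: (Xpair t v == k); case: (Ycur t v == y0); case: (Ypast t v == ys);
     rewrite /= ?mulr1 ?mulr0.
rewrite joint_delta -/qd.
case: (boolP ((Xpair t v == k) && (Ypast t v == ys))) => HXY; last first.
  by rewrite /= !mulr0.
have [HJ|HJ] := eqVneq (J qd v) 0; first by rewrite HJ mulr0 !mul0r mulr0.
move: HXY => /andP[/eqP HX /eqP HY].
suff -> : q t (take t.+1 v.1) (take t v.2) y0 = qterm q w t by rewrite mulrA.
move: HJ; rewrite jointE => /prodf_neq0 HF.
have [y1 Hy1] : exists y1, q t (take t.+1 v.1) (take t v.2) y1 != 0.
  have [_ H1] := sum_pol t v Hq.
  by apply: exists_nz; rewrite H1 oner_neq0.
have [] := @extend v t y1 _ _ Hy1.
- move=> i Hi; move: (HF i isT); rewrite /qterm /qd /hybrid.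
  by have -> : (i == t :> nat) = false by rewrite ltn_eqF.
- by move: (HF t isT); rewrite mulf_eq0 negb_or => /andP[].
move=> w' [Hw' E1 E2 E3].
have Hsz : forall (u : outcome W n), size (take t.+1 u.1) = t.+1 by move=> u; exact: size_take_ordS.
rewrite -E1 -E2 (Hag w' Hw' t) E1 E2.
rewrite (HrS t _ (take t.+1 w.1) _ (Hsz v) (Hsz w)); last by rewrite !drop_pre HX.
rewrite -/(Ypast t v) HY /ys /Ypast -(Hag w Hw t).
by [].
Qed.

Lemma Tt_zero (r' : policy R W) : is_policyS r' ->
  (forall w : outcome W n, 0 < P w -> forall t : 'I_n,
     q t (take t.+1 w.1) (take t w.2) =1 r' t (take t.+1 w.1) (take t w.2)) ->
  forall t, Tt t = 0.
Proof.
move=> HrS Hag t; rewrite /Tt big1 // => w _.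
have [Hw|Hw] := ltP 0 (P w); last first.
  have -> : P w = 0 by apply/eqP; rewrite eq_le Hw P_ge0.
  by rewrite mul0r.
have [_ Hqt] := P_factors Hw t.
have HC : 0 < Ck t (Xpair t w) (Ypast t w).
  by apply: lt_le_trans Hw (prob_pt _); rewrite /= !eqxx.
rewrite /Dt (Ak_factor HrS Hag) // lnM ?posrE //.
have -> : forall a b : R, a - (a + b) + b = 0 by move=> a b; ring.
by rewrite mulr0.
Qed.

Lemma main_result :
  let lhs := mi P (fun w : outcome W n => w.1) (fun w => w.2) in
  let rhs := \sum_(t < n) cmi P (Xpair t) (Ycur t) (Ypast t) in
  rhs <= lhs /\
  (lhs = rhs <->
   exists r : policy R W, is_policyS r /\
     forall w : outcome W n, 0 < P w -> forall t : 'I_n,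
       q t (take t.+1 w.1) (take t w.2) =1 r t (take t.+1 w.1) (take t w.2)).
Proof.
move=> lhs rhs.
have Hd : lhs - rhs = \sum_t Tt t by exact: decomp.
split.
  by rewrite -subr_ge0 Hd; apply: sumr_ge0 => t _; apply: Tt_ge0.
split.
- move=> Heq; have Hs : \sum_t Tt t = 0 by rewrite -Hd Heq subrr.
  have HT : forall t, Tt t = 0.
    by move=> t; apply: (psumr_eq0P (fun t _ => Tt_ge0 t) Hs (i := t) isT).
  exists rpol; split; first exact: rpolS.
  by move=> w Hw t; apply: agree_all.
- move=> [r [HrS Hag]]; apply/eqP; rewrite -subr_eq0 Hd; apply/eqP.
  by apply: big1 => t _; exact: (Tt_zero HrS Hag t).
Qed.

End Main.

End Spec.

Theorem lemma1 (R : realType) (W : finType) (p1 : W -> R) (K : W -> W -> R)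
    (q : policy R W) (n : nat) :
  (forall x, 0 <= p1 x) -> \sum_(x : W) p1 x = 1 ->
  (forall x x', 0 <= K x x') -> (forall x, \sum_(x' : W) K x x' = 1) ->
  is_policyH q -> (0 < n)%N ->
  let P := @joint R W n p1 K q in
  let lhs := mi P (fun w : outcome W n => w.1) (fun w : outcome W n => w.2) in
  let rhs := \sum_(t < n) cmi P (Xpair t) (Ycur t) (Ypast t) in
  rhs <= lhs /\
  (lhs = rhs <->
   exists r : policy R W, is_policyS r /\
     forall w : outcome W n, 0 < P w -> forall t : 'I_n,
       q t (take t.+1 w.1) (take t w.2) =1 r t (take t.+1 w.1) (take t w.2)).
Proof.
move=> Hp1n Hp1 HKn HK Hq _.
exact: (@main_result R W p1 K n Hp1 HK Hp1n HKn q Hq).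
Qed.
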